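(* Let $\langle \mathcal{P}, T\rangle$ be a VPT representation of a graph $G$, and let $q\in V(T)$ with $d_T(q)=h\geq 4$. Suppose there exist $y_1,y_2\in N_T(q)$ such that for every $v\in V(G)$, $\{y_1,y_2\}\not\subseteq V(P_v)$. Then there exists a VPT representation $\langle \mathcal{P}',T'\rangle$ of $G$ with $V(T')=V(T)\cup\{a_q\}$, where $a_q\notin V(T)$, such that $d_{T'}(a_q)=3$, $d_{T'}(q)=h-1$, and $d_{T'}(x)=d_T(x)$ for every $x\in V(T')\setminus\{q,a_q\}$.
   Context: All graphs are finite, simple and connected. A VPT representation $\langle \mathcal{P},T\rangle$ of a graph $G$ is a family $\mathcal{P}=(P_v)_{v\in V(G)}$ of subpaths of a tree $T$ such that two distinct vertices $v,v'$ of $G$ are adjacent iff $P_v$ and $P_{v'}$ share at least one vertex. *)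

(* Defs.v *)
From mathcomp Require Import all_boot.
Set Implicit Arguments. Unset Strict Implicit. Unset Printing Implicit Defensive.

Definition simple_graph (T : finType) (e : rel T) : Prop :=
  symmetric e /\ irreflexive e.

Definition connected_graph (T : finType) (e : rel T) : Prop :=
  forall x y, connect e x y.

Definition has_cycle (T : finType) (e : rel T) : Prop :=
  exists (x : T) (p : seq T),
    [/\ 2 <= size p, path e x p, uniq (x :: p) & e (last x p) x].

Definition is_tree (T : finType) (t : rel T) : Prop :=
  [/\ simple_graph t, connected_graph t & ~ has_cycle t].

Definition is_subpath (T : finType) (t : rel T) (s : seq T) : Prop :=
  match s with
  | [::] => False
  | x :: p => path t x p && uniq (x :: p)
  end.

Definition is_VPT (V W : finType) (e : rel V) (t : rel W) (P : V -> seq W)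
  : Prop :=
  [/\ is_tree t,
      forall v, is_subpath t (P v)
    & forall u v, u != v -> (e u v <-> has (fun x => x \in P v) (P u))].

Definition nbhd (T : finType) (t : rel T) (x : T) : {set T} := [set y | t x y].
Definition degree (T : finType) (t : rel T) (x : T) : nat := #|nbhd t x|.

(* Main.v *)
Require Import Defs.
From mathcomp Require Import all_boot zify.
Set Implicit Arguments. Unset Strict Implicit. Unset Printing Implicit Defensive.

Lemma has_cycleP (T : finType) (e : rel T) :
  has_cycle e <-> exists c : seq T, [/\ 3 <= size c, cycle e c & uniq c].
Proof.
split.
- case=> x [p [Hs Hp Hu He]]; exists (x :: p); split => //=.
  by rewrite rcons_path Hp He.
- case=> [[|x p] [//= Hs Hc Hu]]; exists x, p.
  by move: Hc => /=; rewrite rcons_path => /andP[Hp He].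
Qed.

Section Constr.
Variables (W : finType) (t : rel W) (q y1 y2 : W).

Definition rm (a b : W) : bool :=
  ((a == q) && ((b == y1) || (b == y2))) || ((b == q) && ((a == y1) || (a == y2))).
Definition tw (a b : W) : bool := t a b && ~~ rm a b.
Definition isk (b : W) : bool := [|| b == q, b == y1 | b == y2].
Definition tp (a b : option W) : bool :=
  match a, b with
  | Some a, Some b => tw a b
  | Some a, None => isk a
  | None, Some b => isk b
  | None, None => false
  end.

Fixpoint insp (x : W) (s : seq W) : seq (option W) :=
  match s with
  | [::] => [::]
  | y :: s' => (if rm x y then [:: None; Some y] else [:: Some y]) ++ insp y s'
  end.
Definition ins (s : seq W) : seq (option W) :=
  if s is x :: s' then Some x :: insp x s' else [::].

Lemma rm_isk a b : rm a b -> isk a && isk b.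
Proof.
rewrite /rm /isk.
by case/orP => /andP[/eqP-> /orP[]/eqP->]; rewrite !eqxx ?orbT.
Qed.

Lemma mem_insp_Some x s a : (Some a \in insp x s) = (a \in s).
Proof. elim: s x => [|y s IH] x //=. by case: (rm x y); rewrite /= !inE IH. Qed.

Lemma mem_insp_None x s : None \in insp x s ->
  q \in x :: s /\ (y1 \in x :: s \/ y2 \in x :: s).
Proof.
elim: s x => [|y s IH] x //=.
have sub z : z \in y :: s -> z \in x :: y :: s.
  by move=> Hz; rewrite inE Hz orbT.
case Hr: (rm x y) => /=.
- move=> _; move: Hr; rewrite /rm.
  by case/orP => /andP[/eqP-> /orP[]/eqP->]; rewrite !inE !eqxx ?orbT; split; auto.
- rewrite inE /= => /IH [H1 H2]; split; first exact: sub.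
  by case: H2 => H; [left|right]; apply: sub.
Qed.

Lemma path_insp x s : path t x s -> path tp (Some x) (insp x s).
Proof.
elim: s x => [|y s IH] x //= /andP[Hxy Hp]; rewrite cat_path.
case Hr: (rm x y) => /=.
- by have /andP[-> ->] := rm_isk Hr; rewrite IH.
- by rewrite /tw Hxy Hr IH.
Qed.

Lemma uniq_insp x s : uniq (x :: s) -> ~ (y1 \in x :: s /\ y2 \in x :: s) ->
  uniq (Some x :: insp x s).
Proof.
elim: s x => [|y s IH] x // Hu Hn.
move: (Hu); rewrite cons_uniq => /andP[Hx Hu'].
have sub z : z \in y :: s -> z \in x :: y :: s.
  by move=> Hz; rewrite inE Hz orbT.
have IH' := IH y Hu' (fun H => Hn (conj (sub _ H.1) (sub _ H.2))).
move: Hx; rewrite inE negb_or => /andP[Hxy Hxs].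
rewrite /= -/(insp y s).
case Hr: (rm x y) => /=.
- rewrite !inE /= mem_insp_Some (inj_eq Some_inj) (negbTE Hxy) (negbTE Hxs) /=.
  move: IH' => /= /andP[-> ->]; rewrite !andbT.
  apply/negP => HN; have [Hq Hy] := mem_insp_None HN.
  move: Hr; rewrite /rm => /orP[/andP[/eqP Ex _]|/andP[/eqP Ey /orP[/eqP Ex|/eqP Ex]]].
  + by subst x; move: Hq; rewrite inE (negbTE Hxy) (negbTE Hxs).
  + subst x; case: Hy => Hy.
      by move: Hy; rewrite inE (negbTE Hxy) (negbTE Hxs).
    by apply: Hn; split; [rewrite inE eqxx | apply: sub].
  + subst x; case: Hy => Hy; last first.
      by move: Hy; rewrite inE (negbTE Hxy) (negbTE Hxs).
    by apply: Hn; split; [apply: sub | rewrite inE eqxx].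
- rewrite !inE /= mem_insp_Some (inj_eq Some_inj) (negbTE Hxy) (negbTE Hxs) /=.
  by move: IH' => /= /andP[-> ->].
Qed.


Lemma mem_ins_Some s a : (Some a \in ins s) = (a \in s).
Proof. by case: s => //= x s; rewrite !inE mem_insp_Some (inj_eq Some_inj). Qed.

Lemma mem_ins_None s : None \in ins s -> q \in s.
Proof. by case: s => //= x s; rewrite inE /= => /mem_insp_None []. Qed.

Lemma subpath_ins s : is_subpath t s -> ~ (y1 \in s /\ y2 \in s) ->
  is_subpath tp (ins s).
Proof. by case: s => //= x s /andP[Hp Hu] Hn; rewrite path_insp //=; apply: uniq_insp. Qed.

Lemma has_ins s1 s2 :
  has (fun x => x \in ins s2) (ins s1) = has (fun x => x \in s2) s1.
Proof.
apply/hasP/hasP.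
- case=> [[a|] Ha Hb].
  + by exists a; rewrite -mem_ins_Some.
  + by exists q; apply: mem_ins_None.
- by case=> a Ha Hb; exists (Some a); rewrite mem_ins_Some.
Qed.

Lemma tp_sym : symmetric t -> symmetric tp.
Proof.
move=> ts [a|] [b|] //=.
by rewrite /tw ts /rm orbC.
Qed.

Lemma tp_irr : irreflexive t -> irreflexive tp.
Proof. by move=> ti [a|] //=; rewrite /tw ti. Qed.

Lemma tp_conn : symmetric t -> connected_graph t -> connected_graph tp.
Proof.
move=> ts tc.
have step a b : t a b -> connect tp (Some a) (Some b).
  move=> Hab; case Hr: (rm a b).
    have /andP[Ha Hb] := rm_isk Hr.
    by apply: (connect_trans (y := None)); apply: connect1.
  by apply: connect1; rewrite /= /tw Hab Hr.
have stepS a b : connect tp (Some a) (Some b).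
  have /connectP [p Hp ->] := tc a b.
  elim: p a Hp => [|c p IH] a /=; first by rewrite connect0.
  by case/andP=> Hac Hp; apply: connect_trans (step a c Hac) (IH c Hp).
have Hq x : connect tp (Some q) x.
  case: x => [a|]; first exact: stepS.
  by apply: connect1; rewrite /= /isk eqxx.
have cs := sym_connect_sym (tp_sym ts).
by move=> x y; apply: connect_trans (Hq y); rewrite cs.
Qed.


Lemma key : symmetric t -> t q y1 -> t q y2 -> ~ has_cycle t ->
  forall u w s0, isk u -> isk w -> path tw u (rcons s0 w) ->
  uniq (u :: rcons s0 w) -> False.
Proof.
move=> ts H1 H2 Hc u w s0 Hu Hw Hp Hun.
have mk x p : 2 <= size p -> path t x p -> uniq (x :: p) -> t (last x p) x -> False.
  by move=> *; apply: Hc; exists x, p.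
have twt : subrel tw t by move=> a b /andP[].
have adj b : isk b -> b != q -> t q b && t b q.
  rewrite /isk => /or3P[/eqP->|/eqP->|/eqP->]; rewrite ?eqxx // => _.
    by rewrite (ts y1 q) H1.
  by rewrite (ts y2 q) H2.
have nrm b : isk b -> b != q -> rm q b && rm b q.
  by rewrite /isk => /or3P[/eqP->|/eqP->|/eqP->]; rewrite /rm ?eqxx ?orbT.
case: (eqVneq u q) => [Euq|Nuq].
- subst u.
  have Nwq : w != q.
    by apply/eqP => Ewq; move: Hun; rewrite cons_uniq mem_rcons inE Ewq eqxx.
  apply: (mk q (rcons s0 w)).
  + case: s0 Hp {Hun} => [|z s0] Hp; last by rewrite size_rcons.
    by move: Hp; rewrite /= /tw; case/andP: (nrm w Hw Nwq) => -> _; rewrite andbF.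
  + have := @sub_path _ tw t twt q _ Hp. exact.
  + exact: Hun.
  + by rewrite last_rcons; case/andP: (adj w Hw Nwq).
- case: (boolP (q \in rcons s0 w)) => Hqin.
  + move: Hp Hun; case/splitPr: Hqin => s1 s2.
    rewrite cat_path => /andP[Hp1 /= /andP[Hl _]] Hun.
    apply: (mk u (rcons s1 q)).
    * case: s1 Hp1 Hl Hun => [|z s1]; last by rewrite size_rcons.
      by move=> _ /=; rewrite /tw; case/andP: (nrm u Hu Nuq) => _ ->; rewrite andbF.
    * by rewrite rcons_path (sub_path twt Hp1) (twt _ _ Hl).
    * by move: Hun; rewrite -cat_rcons mem_cat cat_uniq negb_or => /andP[/andP[H _] /and3P[H3 _ _]]; rewrite /= H H3.
    * by rewrite last_rcons; case/andP: (adj u Hu Nuq).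
  + have Nwq : w != q.
      by apply: contraNneq Hqin => <-; rewrite mem_rcons mem_head.
    apply: (mk q (u :: rcons s0 w)).
    * by rewrite /= size_rcons.
    * by rewrite /= (sub_path twt Hp) andbT; case/andP: (adj u Hu Nuq).
    * by rewrite cons_uniq Hun andbT inE negb_or Hqin andbT eq_sym Nuq.
    * by rewrite /= last_rcons; case/andP: (adj w Hw Nwq).
Qed.

Lemma noneP (c : seq (option W)) : None \notin c -> c = map Some (pmap id c).
Proof.
elim: c => [|[a|] c IH] //=; rewrite inE /=.
  by move=> /IH {1}->.
Qed.

Lemma tp_acyclic : symmetric t -> t q y1 -> t q y2 -> ~ has_cycle t ->
  ~ has_cycle tp.
Proof.
move=> ts H1 H2 Hc /has_cycleP [c [Hs Hcy Hu]].
have twt : subrel tw t by move=> a b /andP[].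
case: (boolP (None \in c)) => HN; last first.
  apply: Hc; apply/has_cycleP; exists (pmap id c).
  rewrite (noneP HN) in Hs Hcy Hu; split.
  - by rewrite size_map in Hs.
  - by move: Hcy; rewrite cycle_map; apply: sub_cycle => a b /andP[].
  - by rewrite (map_inj_uniq Some_inj) in Hu.
case/rot_to: HN => i c' Hrot.
have Hcy' : cycle tp (None :: c') by rewrite -Hrot rot_cycle.
have Hu' : uniq (None :: c') by rewrite -Hrot rot_uniq.
have Hs' : 3 <= size (None :: c') by rewrite -Hrot size_rot.
move: Hu' => /andP[HN' Hu'].
move: Hcy' Hs' Hu'; rewrite (noneP HN').
case: (pmap id c') => [|u sw] //; case/lastP: sw => [|s0 w] //.
rewrite /= rcons_path path_map last_map last_rcons.
move=> /andP[Hu0 /andP[Hp Hw]] _ Huq.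
apply: (key ts H1 H2 Hc Hu0 Hw Hp).
by rewrite -(map_inj_uniq Some_inj).
Qed.


Lemma SomeI : injective (@Some W).
Proof. by move=> a b []. Qed.

Lemma card_opt (A : {set option W}) :
  #|A| = (None \in A) + #|[set b | Some b \in A]|.
Proof.
rewrite (cardsD1 None A); congr (_ + _).
have -> : A :\ None = Some @: [set b | Some b \in A].
  apply/setP => -[b|]; rewrite !inE.
  - by rewrite (mem_imset _ _ SomeI) inE.
  - by symmetry; apply/negbTE/imsetP => -[x _].
by rewrite (card_imset _ SomeI).
Qed.

Lemma deg_Some x : degree tp (Some x) = isk x + #|[set b | tw x b]|.
Proof.
rewrite /degree /nbhd card_opt inE /=; congr (_ + _).
by apply: eq_card => b; rewrite !inE.
Qed.

Lemma deg_None : q != y1 -> q != y2 -> y1 != y2 -> degree tp None = 3.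
Proof.
move=> q1 q2 y12.
rewrite /degree /nbhd card_opt.
have -> : #|[set b | Some b \in [set y | tp None y]]| = #|[set q; y1; y2]|.
  by apply: eq_card => b; rewrite !inE /= /isk orbA.
rewrite inE /= add0n.
by rewrite setUC cardsU1 cards2 !inE ![y2 == _]eq_sym (negbTE q2) (negbTE y12) q1.
Qed.

Lemma deg_q : t q y1 -> t q y2 -> q != y1 -> q != y2 -> y1 != y2 ->
  degree tp (Some q) = degree t q - 1.
Proof.
move=> H1 H2 q1 q2 y12.
rewrite deg_Some /isk eqxx /=.
have -> : #|[set b | tw q b]| = #|(nbhd t q :\ y1) :\ y2|.
  apply: eq_card => b; rewrite !inE /tw /rm eqxx (negbTE q1) (negbTE q2) /=.
  by case: (t q b); case: (b == y1); case: (b == y2); rewrite ?andbF.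
have e1 := cardsD1 y1 (nbhd t q).
have e2 := cardsD1 y2 (nbhd t q :\ y1).
rewrite !inE H1 H2 eq_sym (negbTE y12) /= in e1 e2.
rewrite /degree e1 e2; lia.
Qed.

Lemma deg_other x : symmetric t -> t q y1 -> t q y2 -> x != q ->
  degree tp (Some x) = degree t x.
Proof.
move=> ts H1 H2 Nxq.
rewrite deg_Some /isk (negbTE Nxq) /=.
case: (boolP ((x == y1) || (x == y2))) => Hx.
- idtac.
  have -> : #|[set b | tw x b]| = #|nbhd t x :\ q|.
    apply: eq_card => b; rewrite !inE /tw /rm (negbTE Nxq) Hx /=.
    by rewrite andbT andbC.
  have Hq : q \in nbhd t x.
    by rewrite inE ts; case/orP: Hx => /eqP ->.
  by rewrite /degree (cardsD1 q (nbhd t x)) Hq.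
- rewrite add0n.
  have -> : #|[set b | tw x b]| = #|nbhd t x|.
    apply: eq_card => b; rewrite !inE /tw /rm (negbTE Nxq) (negbTE Hx) /=.
    by rewrite andbF andbT.
  by [].
Qed.

End Constr.

Theorem mainTheorem3
  (V W : finType) (e : rel V) (t : rel W) (P : V -> seq W)
  (HG : simple_graph e) (HGc : connected_graph e)
  (HP : is_VPT e t P)
  (q : W) (h : nat) (Hdeg : degree t q = h) (Hh : 4 <= h)
  (y1 y2 : W) (Hy1 : y1 \in nbhd t q) (Hy2 : y2 \in nbhd t q)
  (Hy12 : y1 != y2)
  (Hnot : forall v : V, ~ (y1 \in P v /\ y2 \in P v)) :
  exists (t' : rel (option W)) (P' : V -> seq (option W)),
    [/\ is_VPT e t' P',
        degree t' None = 3,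
        degree t' (Some q) = h - 1
      & forall x : W, x != q -> degree t' (Some x) = degree t x].
Proof.
case: HP => [[[ts ti] tc ta] HPs HPe].
have H1 : t q y1 by rewrite inE in Hy1.
have H2 : t q y2 by rewrite inE in Hy2.
have q1 : q != y1 by apply: contraTneq H1 => <-; rewrite ti.
have q2 : q != y2 by apply: contraTneq H2 => <-; rewrite ti.
exists (tp t q y1 y2), (fun v => ins q y1 y2 (P v)).
split.
- split.
  + split; [split; [exact: tp_sym | exact: tp_irr] | exact: tp_conn | exact: tp_acyclic].
  + by move=> v; apply: subpath_ins.
  + by move=> u v Huv; rewrite has_ins; exact: HPe.
- exact: deg_None.
- by rewrite deg_q // Hdeg.
- by move=> x Hx; exact: deg_other.
Qed.
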